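(* For all integers $L\ge 0$ and $n\ge 1$, $$S_L(n+1,n)=\frac{n(n+1)}{2}\left[\frac{(n+1)!}{2}\right]^{L}=\left[\frac{(n+1)!}{2}\right]^{L}S_0(n+1,n).$$
   Context: For an integer $L\ge 0$ let ${}_0F_L(z)=\sum_{n=0}^{\infty}\frac{z^n}{(n!)^{L+1}}$. Define the numbers $S_L(n,l)$ ($n,l\ge 0$) by the formal power series identities $\frac{({}_0F_L(z)-1)^l}{l!}=\sum_{n\ge l}\frac{S_L(n,l)}{(n!)^{L+1}}z^n$ for each $l\ge 0$. In particular $S_0(n,l)$ are the Stirling numbers of the second kind. *)

(* Defs.v *)
From mathcomp Require Import all_boot all_order all_algebra.
Set Implicit Arguments. Unset Strict Implicit. Unset Printing Implicit Defensive.
Import GRing.Theory Num.Theory.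
Local Open Scope ring_scope.

(* Truncation at degree N of the formal power series
   0F_L(z) = sum_{k>=0} z^k / (k!)^(L+1), as a polynomial over rat. *)
Definition F0L_trunc (L N : nat) : {poly rat} :=
  \poly_(k < N.+1) (((k`!)%:R : rat) ^+ L.+1)^-1.

(* S_L(n,l) := (n!)^(L+1) * [z^n] ( (0F_L(z) - 1)^l / l! ).
   The coefficient of z^n of (0F_L - 1)^l only depends on the terms of
   0F_L of degree <= n, so truncating at degree n is exact. *)
Definition S_L (L n l : nat) : rat :=
  ((n`!)%:R ^+ L.+1) * (((F0L_trunc L n - 1) ^+ l)`_n / (l`!)%:R).

(* Main.v *)
Require Import Defs.
From mathcomp Require Import all_boot all_order all_algebra.
From mathcomp Require Import ring lra.
Import GRing.Theory Num.Theory.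
Local Open Scope ring_scope.

Lemma powcoef1 (R : comNzRingType) (q : {poly R}) (m : nat) :
  (q ^+ m.+1)`_1 = m.+1%:R * q`_0 ^+ m * q`_1.
Proof.
elim: m => [|m IH]; first by rewrite expr1 mul1r expr0 mul1r.
rewrite exprSr coefM big_ord_recr big_ord_recl big_ord0 /= IH subn0 subnn.
have -> : (q ^+ m.+1)`_0 = q`_0 ^+ m.+1.
  elim: m.+1 => [|k IHk]; first by rewrite expr0 coefC.
  by rewrite exprSr coef0M IHk exprSr.
rewrite !exprS -!natr1. ring.
Qed.

Lemma key (R : comNzRingType) (p : {poly R}) (m : nat) : p`_0 = 0 ->
  (p ^+ m.+1)`_m.+2 = m.+1%:R * p`_1 ^+ m * p`_2.
Proof.
move=> p0.
have hp : p = drop_poly 1 p * 'X.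
  apply/polyP => i; rewrite coefMX coef_drop_poly.
  by case: i => [|i] //=; rewrite addn1.
rewrite hp exprMn coefMXn ltnNge leqnSn /= subSS subSnn powcoef1 !coefMX /= !coef_drop_poly.
by [].
Qed.


Lemma S_val (L n : nat) : (1 <= n)%N ->
  S_L L n.+1 n = ((n * n.+1)%:R / 2) * (((n.+1)`!)%:R / 2) ^+ L.
Proof.
case: n => // n _.
rewrite /S_L key; last by rewrite coefB coef_poly coefC /= fact0 expr1n invr1 subrr.
rewrite !coefB !coef_poly !coefC /= subr0.
have e1 : (1`!)%:R = 1 :> rat by [].
have e2 : (2`!)%:R = 2 :> rat by [].
rewrite e1 e2 subr0 expr1n invr1 expr1n mulr1 (factS n.+1).
move: (fact_gt0 n.+1); generalize ((n.+1)`!) => k hk.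
rewrite !natrM.
have hf : k%:R != 0 :> rat by rewrite pnatr_eq0 -lt0n.
have hn : n.+1%:R != 0 :> rat by rewrite pnatr_eq0.
rewrite !exprMn !exprVn !exprS.
field.
by rewrite hf expf_neq0.
Qed.

Theorem mainTheorem4 (L n : nat) (hn : (1 <= n)%N) :
  S_L L n.+1 n = ((n * n.+1)%:R / 2) * (((n.+1)`!)%:R / 2) ^+ L
  /\ S_L L n.+1 n = (((n.+1)`!)%:R / 2) ^+ L * S_L 0 n.+1 n.
Proof.
split; first exact: S_val.
by rewrite !S_val // expr0 mulr1 mulrC.
Qed.
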